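(* Fix $n\ge2$ and a point $H\in\mathcal S_n$, with first currents $H^{(1)},\dots,H^{(n-1)}$. Define the stationary Faà di Bruno basis $\{F^{(j)}\}_{j\in\mathbb Z}$ by $F^{(a)}=H^{(a)}$ for $a=0,\dots,n-1$ (with $H^{(0)}=1$) and $F^{(j+n)}=z^nF^{(j)}$ for all $j\in\mathbb Z$. Let $\widetilde{\mathcal H}_+$ be the span of $\{F^{(j)}\}_{j\ge0}$ and $\widetilde{\mathcal H}_-$ the space of (possibly infinite) combinations of $\{F^{(j)}\}_{j<0}$, so $\mathcal L=\widetilde{\mathcal H}_+\oplus\widetilde{\mathcal H}_-$ with projections $\tilde\pi_\pm$. Then for every $j\ge0$ the current $H^{(j)}$ of the point $H$ equals $\tilde\pi_+(z^j)$, and the restriction of the central system vector field $X_j$ to $\mathcal S_n$, written in the coordinates $(H^{(1)},\dots,H^{(n-1)})$, is $$\frac{\partial H^{(a)}}{\partial t_j}=-\tilde\pi_-\big(H^{(a)}\,\tilde\pi_+(z^j)\big),\qquad a=1,\dots,n-1,\ j\ge1.$$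
   Context: Let $z$ be a formal variable and $\mathcal L$ the space of formal Laurent series $\sum_{j\le N} l_j z^j$ (finitely many positive powers of $z$). Let $\mathcal H$ be the set of sequences $H=(H^{(k)})_{k\ge0}$ of elements of $\mathcal L$ with $H^{(0)}=1$ and, for $k\ge1$, $H^{(k)}=z^k+\sum_{l\ge1}H^k_l z^{-l}$; the coefficients $H^k_l$ are coordinates on $\mathcal H$, and we set $H^0_l=0$. The central system (CS) is the family of vector fields $X_j$, $j\ge1$, on $\mathcal H$, with associated times $t_j$, defined by $$\frac{\partial H^{(k)}}{\partial t_j}=H^{(j+k)}-H^{(j)}H^{(k)}+\sum_{l=1}^{k}H^j_lH^{(k-l)}+\sum_{l=1}^{j}H^k_lH^{(j-l)},\qquad k\ge0.$$ $\mathcal S_n=\{H\in\mathcal H: X_n(H)=0,\ H^{(n)}=z^n\}$; it is invariant under all $X_j$ and every point of it is determined by $(H^{(1)},\dots,H^{(n-1)})$. *)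

(* Defs.v *)
(* Formal Laurent series with finitely many positive powers
   are represented by their coefficient functions int -> R. *)
From HB Require Import structures.
From mathcomp Require Import all_boot all_order all_algebra.
From Stdlib Require Import ClassicalEpsilon.
Set Implicit Arguments. Unset Strict Implicit. Unset Printing Implicit Defensive.
Import Order.TTheory GRing.Theory Num.Theory.
Local Open Scope ring_scope.

Section CentralSystem.
Variable R : fieldType.

Definition lser := int -> R.

Definition is_laurent (f : lser) : Prop :=
  exists N : int, forall m : int, N < m -> f m = 0.

Definition lzero : lser := fun _ => 0.
Definition ladd (f g : lser) : lser := fun m => f m + g m.
Definition lopp (f : lser) : lser := fun m => - f m.
Definition zpow (k : int) : lser := fun m => if m == k then 1 else 0.
Definition lone : lser := zpow 0.
(* z^k * f *)
Definition lshift (k : int) (f : lser) : lser := fun m => f (m - k).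

(* an upper bound for the degree (chosen classically; meaningful for laurent f) *)
Definition ubound (f : lser) : int :=
  epsilon (inhabits (0 : int)) (fun N => forall m : int, N < m -> f m = 0).

(* product in L: coefficient of z^m is sum_i f_i g_(m-i), a finite sum *)
Definition lmul (f g : lser) : lser := fun m =>
  let d := ubound f + ubound g - m in
  if d < 0 then 0
  else \sum_(k < (absz d).+1) f (m - ubound g + k%:Z) * g (ubound g - k%:Z).

(* A point H of calH is given by its coordinates: hp k l = H^k_l (k, l >= 1);
   the values hp 0 _ and hp _ 0 are irrelevant. *)
Definition hpoint := nat -> nat -> R.

Definition Hc (hp : hpoint) (k l : nat) : R := if k == 0%N then 0 else hp k l.

(* the current H^(k): H^(0) = 1, H^(k) = z^k + sum_(l>=1) H^k_l z^-l *)
Definition current (hp : hpoint) (k : nat) : lser :=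
  if k == 0%N then lone
  else fun m => if m == k%:Z then 1 else if m < 0 then hp k (absz m) else 0.

(* The central system: X_j(H)^(k) = dH^(k)/dt_j *)
Definition CS (hp : hpoint) (j k : nat) : lser := fun m =>
  current hp (j + k) m - lmul (current hp j) (current hp k) m
  + \sum_(1 <= l < k.+1) Hc hp j l * current hp (k - l) m
  + \sum_(1 <= l < j.+1) Hc hp k l * current hp (j - l) m.

Definition in_Sn (n : nat) (hp : hpoint) : Prop :=
  (forall k : nat, CS hp n k = lzero) /\ current hp n = zpow n%:Z.

(* stationary Faa di Bruno basis: F^(a + n q) = z^(n q) H^(a), 0 <= a < n *)
Definition FdB (n : nat) (hp : hpoint) (j : int) : lser :=
  lshift (n%:Z * (j %/ n%:Z)%Z) (current hp (absz (j %% n%:Z)%Z)).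

Definition in_Hplus (n : nat) (hp : hpoint) (f : lser) : Prop :=
  exists (K : nat) (b : nat -> R),
    f = fun m => \sum_(k < K) b k * FdB n hp k%:Z m.

(* tilde H_- : possibly infinite combinations sum_(k>=0) b_k F^(-k-1),
   converging formally (coefficientwise only finitely many nonzero terms) *)
Definition in_Hminus (n : nat) (hp : hpoint) (f : lser) : Prop :=
  exists b : nat -> R, forall m : int, exists K : nat,
    (forall k : nat, (K <= k)%N -> FdB n hp (- (k%:Z + 1)) m = 0) /\
    f m = \sum_(k < K) b k * FdB n hp (- (k%:Z + 1)) m.

Definition is_decomp (n : nat) (hp : hpoint) (f p q : lser) : Prop :=
  [/\ in_Hplus n hp p, in_Hminus n hp q & f = ladd p q].

Definition direct_decomposition (n : nat) (hp : hpoint) : Prop :=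
  (forall f, is_laurent f -> exists p q, is_decomp n hp f p q) /\
  (forall f p q p' q', is_decomp n hp f p q -> is_decomp n hp f p' q' ->
     p = p' /\ q = q').

Definition piplus (n : nat) (hp : hpoint) (f : lser) : lser :=
  epsilon (inhabits lzero) (fun p => exists q, is_decomp n hp f p q).
Definition piminus (n : nat) (hp : hpoint) (f : lser) : lser :=
  ladd f (lopp (piplus n hp f)).

End CentralSystem.

(* Main.v *)
Require Import Defs.
From HB Require Import structures.
From mathcomp Require Import all_boot all_order all_algebra.
From mathcomp Require Import zify ring.
From Stdlib Require Import ClassicalEpsilon FunctionalExtensionality.
Import Order.TTheory GRing.Theory Num.Theory.
Local Open Scope ring_scope.
Set Implicit Arguments. Unset Strict Implicit. Unset Printing Implicit Defensive.

Section Aux.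
Variable R : fieldType.
Implicit Types (hp : hpoint R) (f g : lser R).

Lemma curP hp (k : nat) (x : int) : 0 <= x ->
  current hp k x = if x == k%:Z then 1 else 0.
Proof.
move=> x0; rewrite /current; case: (eqVneq k 0%N) => [k0|k0] /=.
  by rewrite /lone /zpow k0.
case: ifP => // _; case: ifP => //; lia.
Qed.

Lemma curN hp (k : nat) (x : int) : x < 0 ->
  current hp k x = Hc hp k (absz x).
Proof.
move=> x0; rewrite /current /Hc; case: (eqVneq k 0%N) => [k0|k0] /=.
  by rewrite /lone /zpow; case: ifP => //; lia.
case: ifP; first lia. by rewrite x0.
Qed.

Lemma sum_pick (lo hi c : nat) (F : nat -> R) :
  (forall l, (lo <= l < hi)%N -> l != c -> F l = 0) ->
  \sum_(lo <= l < hi) F l = if (lo <= c < hi)%N then F c else 0.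
Proof.
elim: hi => [|hi IH] H.
  by rewrite big_geq // andbF.
case: (leqP lo hi) => lohi; last first.
  rewrite big_geq //; case: ifP => //; lia.
rewrite big_nat_recr //= IH; last by move=> l hl; apply: H; lia.
case: (eqVneq c hi) => [->|chi].
  by rewrite ltnn andbF add0r lohi ltnSn.
have -> : F hi = 0 by apply: H; [lia | rewrite eq_sym].
rewrite addr0; have -> : (c < hi.+1)%N = (c < hi)%N by lia.
by [].
Qed.

Lemma sum_ord_pick (N c : nat) (F : nat -> R) :
  (forall l, (l < N)%N -> l != c -> F l = 0) ->
  \sum_(l < N) F l = if (c < N)%N then F c else 0.
Proof.
move=> H; rewrite -(big_mkord xpredT F) (@sum_pick 0 N c) //.
Qed.


Definition vb (f : lser R) (A : int) := forall m, A < m -> f m = 0.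

Definition conv (f g : lser R) (A B : int) (m : int) : R :=
  let d := A + B - m in
  if d < 0 then 0
  else \sum_(k < (absz d).+1) f (m - B + k%:Z) * g (B - k%:Z).

Lemma vb_mono f A A' : vb f A -> A <= A' -> vb f A'.
Proof. by move=> H le m lt; apply: H; lia. Qed.

Lemma conv_A1 f g A B m : vb f A -> conv f g A B m = conv f g (A + 1) B m.
Proof.
move=> vf; rewrite /conv /=.
have -> : A + 1 + B - m = (A + B - m) + 1 by ring.
case E: (A + B - m) => [D|D].
  have -> : (Posz D + 1 < 0) = false by lia.
  have -> : (Posz D < 0) = false by lia.
  have -> : absz (Posz D + 1) = D.+1 by lia.
  rewrite [in RHS]big_ord_recr /=.
  have -> : f (m - B + D.+1%:Z) = 0 by apply: vf; lia.
  by rewrite mul0r addr0.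
have -> : (Negz D < 0) = true by lia.
case: D E => [|D] E.
  have -> : (Negz 0 + 1 < 0) = false by lia.
  have -> : absz (Negz 0 + 1) = 0%N by lia.
  rewrite [in RHS]big_ord_recr big_ord0 /=.
  have -> : f (m - B + 0%:Z) = 0 by apply: vf; lia.
  by rewrite mul0r addr0.
have -> : (Negz D.+1 + 1 < 0) = true by lia.
by [].
Qed.

Lemma conv_B1 f g A B m : vb g B -> conv f g A B m = conv f g A (B + 1) m.
Proof.
move=> vg; rewrite /conv /=.
have -> : A + (B + 1) - m = (A + B - m) + 1 by ring.
case E: (A + B - m) => [D|D].
  have -> : (Posz D + 1 < 0) = false by lia.
  have -> : (Posz D < 0) = false by lia.
  have -> : absz (Posz D + 1) = D.+1 by lia.
  rewrite [in RHS]big_ord_recl /= (vg (B + 1 - 0%:Z)) ?mulr0 ?add0r; last by lia.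
  apply: eq_bigr => k _ /=; congr (f _ * g _); rewrite /bump /=; lia.
have -> : (Negz D < 0) = true by lia.
case: D E => [|D] E.
  have -> : (Negz 0 + 1 < 0) = false by lia.
  have -> : absz (Negz 0 + 1) = 0%N by lia.
  rewrite [in RHS]big_ord_recr big_ord0 /=.
  have -> : g (B + 1 - 0%:Z) = 0 by apply: vg; lia.
  by rewrite mulr0 addr0.
have -> : (Negz D.+1 + 1 < 0) = true by lia.
by [].
Qed.

Lemma conv_Ak f g A B m (k : nat) : vb f A -> conv f g A B m = conv f g (A + k%:Z) B m.
Proof.
move=> vf; elim: k => [|k IH]; first by rewrite addr0.
rewrite IH conv_A1; last by apply: vb_mono vf _; lia.
congr conv; lia.
Qed.

Lemma conv_Bk f g A B m (k : nat) : vb g B -> conv f g A B m = conv f g A (B + k%:Z) m.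
Proof.
move=> vg; elim: k => [|k IH]; first by rewrite addr0.
rewrite IH conv_B1; last by apply: vb_mono vg _; lia.
congr conv; lia.
Qed.

Lemma conv_mono f g A B A' B' m : vb f A -> vb g B -> A <= A' -> B <= B' ->
  conv f g A B m = conv f g A' B' m.
Proof.
move=> vf vg la lb.
rewrite (conv_Ak _ _ _ (absz (A' - A)) vf).
have -> : A + (absz (A' - A))%:Z = A' by lia.
rewrite (conv_Bk _ _ _ (absz (B' - B)) vg).
have -> : B + (absz (B' - B))%:Z = B' by lia.
by [].
Qed.

Lemma conv_indep f g A B A' B' m : vb f A -> vb g B -> vb f A' -> vb g B' ->
  conv f g A B m = conv f g A' B' m.
Proof.
move=> vf vg vf' vg'.
rewrite (@conv_mono f g A B (Num.max A A') (Num.max B B')) //; try lia.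
rewrite (@conv_mono f g A' B' (Num.max A A') (Num.max B B')) //; lia.
Qed.

Lemma ubound_vb f : is_laurent f -> vb f (ubound f).
Proof.
move=> [N HN]; rewrite /ubound.
by apply: (epsilon_spec (inhabits (0:int)) (fun N => forall m : int, N < m -> f m = 0)); exists N.
Qed.

Lemma lmulE f g A B m : is_laurent f -> is_laurent g -> vb f A -> vb g B ->
  lmul f g m = conv f g A B m.
Proof.
move=> lf lg vf vg; rewrite (@conv_indep f g A B (ubound f) (ubound g)) //;
  exact: ubound_vb.
Qed.

Lemma vb_laurent f A : vb f A -> is_laurent f.
Proof. by move=> H; exists A. Qed.

Lemma conv_comm f g A B m : conv f g A B m = conv g f B A m.
Proof.
rewrite /conv /=. have -> : B + A - m = A + B - m by ring.
case: ifP => // hd.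
rewrite (reindex_inj rev_ord_inj) /=.
apply: eq_bigr => k _; rewrite mulrC; move: (ltn_ord k) => hk; congr (g _ * f _); lia.
Qed.

Lemma lmulC f g : is_laurent f -> is_laurent g -> lmul f g = lmul g f.
Proof.
move=> lf lg; apply: functional_extensionality => m.
rewrite (@lmulE f g (ubound f) (ubound g)) ?(@lmulE g f (ubound g) (ubound f));
  try exact: ubound_vb; try done.
exact: conv_comm.
Qed.


Section Fdb.
Variables (n : nat) (hp : hpoint R).
Hypothesis n0 : (0 < n)%N.

Local Notation F := (FdB n hp).

Lemma F_top (j m : int) : j < m -> F j m = 0.
Proof.
move=> jm; rewrite /FdB /Defs.lshift.
have nz : n%:Z != 0 by lia.
have r0 := modz_ge0 j nz.
have rn : (j %% n%:Z)%Z < n%:Z by apply: ltz_pmod; lia.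
have dj := divz_eq j n%:Z.
rewrite curP; last by lia.
case: ifP => //; lia.
Qed.

Lemma F_diag (j : int) : F j j = 1.
Proof.
rewrite /FdB /Defs.lshift.
have nz : n%:Z != 0 by lia.
have r0 := modz_ge0 j nz.
have rn : (j %% n%:Z)%Z < n%:Z by apply: ltz_pmod; lia.
have dj := divz_eq j n%:Z.
rewrite curP; last by lia.
case: ifP => //; lia.
Qed.

Lemma F_shift (j : int) : F (j + n%:Z) = Defs.lshift n%:Z (F j).
Proof.
rewrite /FdB /Defs.lshift; apply: functional_extensionality => m.
have nz : n%:Z != 0 by lia.
have -> : j + n%:Z = 1 * n%:Z + j by ring.
rewrite divzMDl // modzMDl.
congr current; lia.
Qed.

Lemma F_small (j : nat) : (j < n)%N -> F j%:Z = current hp j.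
Proof.
move=> jn; rewrite /FdB /Defs.lshift; apply: functional_extensionality => m.
rewrite divz_nat modz_nat divn_small // modn_small //.
by rewrite mulr0 subr0.
Qed.


Lemma sum_pad (K K' : nat) (b G : nat -> R) : (K <= K')%N ->
  \sum_(k < K) b k * G k = \sum_(k < K') (if (k < K)%N then b k else 0) * G k.
Proof.
move=> le; rewrite (big_ord_widen K' (fun k => b k * G k) le) big_mkcond.
by apply: eq_bigr => k _; case: ifP => _; rewrite ?mul0r.
Qed.

Lemma Hp0 : in_Hplus n hp (fun _ => 0).
Proof. exists 0%N, (fun _ => 0); apply: functional_extensionality => m; by rewrite big_ord0. Qed.

Lemma HpD f g : in_Hplus n hp f -> in_Hplus n hp g -> in_Hplus n hp (fun m => f m + g m).
Proof.
move=> [K1 [b1 ->]] [K2 [b2 ->]].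
exists (K1 + K2)%N, (fun k => (if (k < K1)%N then b1 k else 0) + (if (k < K2)%N then b2 k else 0)).
apply: functional_extensionality => m.
rewrite (@sum_pad K1 (K1 + K2) b1 (fun k => F k%:Z m)) ?leq_addr //.
rewrite (@sum_pad K2 (K1 + K2) b2 (fun k => F k%:Z m)) ?leq_addl //.
rewrite -big_split /=; apply: eq_bigr => k _; by rewrite mulrDl.
Qed.

Lemma HpZ c f : in_Hplus n hp f -> in_Hplus n hp (fun m => c * f m).
Proof.
move=> [K [b ->]]; exists K, (fun k => c * b k).
apply: functional_extensionality => m; rewrite mulr_sumr.
by apply: eq_bigr => k _; rewrite mulrA.
Qed.

Lemma HpF (k : nat) : in_Hplus n hp (F k%:Z).
Proof.
exists k.+1, (fun i => if i == k then 1 else 0).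
apply: functional_extensionality => m.
rewrite (@sum_ord_pick k.+1 k (fun i => (if i == k then 1 else 0) * F i%:Z m)).
  by rewrite ltnSn eqxx mul1r.
by move=> l _ /negbTE ->; rewrite mul0r.
Qed.

Lemma Hp_sum (s : seq nat) (h : nat -> lser R) :
  (forall i, i \in s -> in_Hplus n hp (h i)) -> in_Hplus n hp (fun m => \sum_(i <- s) h i m).
Proof.
elim: s => [|x s IH] H.
  have -> : (fun m => \sum_(i <- [::]) h i m) = (fun _ => 0).
    by apply: functional_extensionality => m; rewrite big_nil.
  exact: Hp0.
have -> : (fun m => \sum_(i <- x :: s) h i m) = (fun m => h x m + \sum_(i <- s) h i m).
  by apply: functional_extensionality => m; rewrite big_cons.
apply: HpD; first by apply: H; rewrite mem_head.
by apply: IH => i hi; apply: H; rewrite in_cons hi orbT.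
Qed.

Lemma HpS f : in_Hplus n hp f -> in_Hplus n hp (Defs.lshift n%:Z f).
Proof.
move=> [K [b ->]].
have -> : Defs.lshift n%:Z (fun m => \sum_(k < K) b k * F k%:Z m) =
  (fun m => \sum_(i <- index_iota 0 K) (fun i m => b i * F (i + n)%N%:Z m) i m).
  apply: functional_extensionality => m; rewrite /Defs.lshift big_mkord.
  by apply: eq_bigr => k _; rewrite PoszD F_shift.
by apply: Hp_sum => i _; apply: HpZ; apply: HpF.
Qed.

Lemma tri_uniq K (c : nat -> R) :
  (forall M : nat, \sum_(k < K) c k * F k%:Z M%:Z = 0) -> forall k, (k < K)%N -> c k = 0.
Proof.
elim: K => [|K IH] H k; first by [].
have cK : c K = 0.
  have := H K; rewrite big_ord_recr /= F_diag mulr1 big1 ?add0r //.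
  by move=> i _; rewrite F_top ?mulr0 //; have := ltn_ord i; lia.
rewrite ltnS leq_eqVlt => /orP [/eqP -> //|kK].
apply: IH => // M; have := H M; by rewrite big_ord_recr /= cK mul0r addr0.
Qed.

Lemma Hm_zero q : in_Hminus n hp q -> forall m, 0 <= m -> q m = 0.
Proof.
move=> [b Hb] m m0; have [K [_ ->]] := Hb m.
by apply: big1 => k _; rewrite F_top ?mulr0 //; lia.
Qed.

Lemma decomp_uniq f p q p' q' : is_decomp n hp f p q -> is_decomp n hp f p' q' ->
  p = p' /\ q = q'.
Proof.
move=> [[K [b Hp]] hq ->] [[K' [b' Hp']] hq' E].
pose bb k := (if (k < K + K')%N then (if (k < K)%N then b k else 0) - (if (k < K')%N then b' k else 0) else 0).
have pp : p = p'.
  have H0 : forall k, (k < K + K')%N -> (if (k < K)%N then b k else 0) - (if (k < K')%N then b' k else 0) = 0.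
    apply: tri_uniq => M.
    have EM := equal_f E M%:Z; rewrite /ladd (Hm_zero hq) // (Hm_zero hq') // !addr0 in EM.
    move: EM; rewrite Hp Hp'.
    rewrite (@sum_pad K (K + K') b (fun k => F k%:Z M%:Z)) ?leq_addr //.
    rewrite (@sum_pad K' (K + K') b' (fun k => F k%:Z M%:Z)) ?leq_addl // => EM.
    by rewrite -[RHS](subrr (\sum_(k < K + K') (if (k < K')%N then b' k else 0) * F k%:Z M%:Z))
      -{1}EM -sumrB; apply: eq_bigr => k _; rewrite mulrBl.
  rewrite Hp Hp'; apply: functional_extensionality => m.
  rewrite (@sum_pad K (K + K') b (fun k => F k%:Z m)) ?leq_addr //.
  rewrite (@sum_pad K' (K + K') b' (fun k => F k%:Z m)) ?leq_addl //.
  apply: eq_bigr => k _; congr (_ * _); apply/eqP; rewrite -subr_eq0; apply/eqP.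
  exact: H0.
split => //; apply: functional_extensionality => m.
have := equal_f E m; rewrite /ladd pp; exact: addrI.
Qed.


Lemma plus_part (N : nat) : forall f : lser R, (forall m : int, N%:Z <= m -> f m = 0) ->
  exists p, in_Hplus n hp p /\ forall m, 0 <= m -> f m = p m.
Proof.
elim: N => [|N IH] f Hf.
  exists (fun _ => 0); split; first exact: Hp0.
  by move=> m m0; apply: Hf.
have H' : forall m : int, N%:Z <= m -> (fun m => f m - f N%:Z * F N%:Z m) m = 0.
  move=> m /=; rewrite le_eqVlt => /orP [/eqP <-|lt].
    by rewrite F_diag mulr1 subrr.
  by rewrite Hf ?F_top ?mulr0 ?subrr //; lia.
have [p' [Hp' Ep']] := IH _ H'.
exists (fun m => p' m + f N%:Z * F N%:Z m); split.
  by apply: HpD => //; apply: HpZ; apply: HpF.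
by move=> m m0; rewrite -Ep' // subrK.
Qed.

Section Minus.
Variable q : lser R.
Local Notation Gm k := (F (- (k%:Z + 1))).

Fixpoint bf (k : nat) : nat -> R :=
  match k with
  | 0 => fun _ => 0
  | k'.+1 => fun i => if i == k' then
      q (- (k'%:Z + 1)) - \sum_(i' < k') bf k' i' * Gm i' (- (k'%:Z + 1))
      else bf k' i
  end.

Definition bb i := bf i.+1 i.

Lemma bf_stable K i : (i < K)%N -> bf K i = bb i.
Proof.
elim: K => [//|K IH] iK /=.
case: (eqVneq i K) => [->|iK'].
  by rewrite /bb /= eqxx.
by apply: IH; rewrite ltnS leq_eqVlt (negbTE iK') in iK.
Qed.

Lemma bb_key k : q (- (k%:Z + 1)) = \sum_(i < k.+1) bb i * Gm i (- (k%:Z + 1)).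
Proof.
rewrite big_ord_recr /= F_diag mulr1 /bb /= eqxx.
rewrite (eq_bigr (fun i : 'I_k => bf k i * Gm i (- (k%:Z + 1)))).
  by rewrite addrC subrK.
by move=> i _; rewrite (@bf_stable k i) ?ltn_ord.
Qed.

Lemma minus_part : (forall m, 0 <= m -> q m = 0) -> in_Hminus n hp q.
Proof.
move=> Hq; exists bb => m.
case: m => [M|k0].
  exists 0%N; split; last by rewrite big_ord0 Hq.
  by move=> k _; rewrite F_top //; lia.
exists k0.+1; split.
  by move=> k kk; rewrite F_top //; lia.
have -> : Negz k0 = - (k0%:Z + 1) by lia.
exact: bb_key.
Qed.
End Minus.

Lemma decomp_exists f : is_laurent f -> exists p q, is_decomp n hp f p q.
Proof.
move=> [N HN].
have [p [Hp Ep]] := @plus_part (absz N).+1 f (fun m hm => HN m ltac:(lia)).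
exists p, (fun m => f m - p m); split => //.
  by apply: minus_part => m m0; rewrite Ep // subrr.
by apply: functional_extensionality => m; rewrite /ladd addrC subrK.
Qed.

Lemma dd : direct_decomposition n hp.
Proof. split; [exact: decomp_exists | exact: decomp_uniq]. Qed.

Lemma piplus_eq f p q : is_decomp n hp f p q -> piplus n hp f = p.
Proof.
move=> H; rewrite /piplus.
have [q' Hq'] := epsilon_spec (inhabits (lzero R)) (fun p => exists q, is_decomp n hp f p q)
  (ex_intro _ p (ex_intro _ q H)).
by have [-> _] := decomp_uniq Hq' H.
Qed.

End Fdb.

Lemma cur_vb hp (k : nat) : vb (current hp k) k%:Z.
Proof. by move=> m km; rewrite curP; [case: ifP => //; lia | lia]. Qed.

Lemma zpow_vb (k : int) : vb (zpow R k) k.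
Proof. by move=> m km; rewrite /zpow; case: ifP => //; lia. Qed.

Lemma lmul_zpow (k : int) g B : vb g B -> lmul (zpow R k) g = Defs.lshift k g.
Proof.
move=> vg; apply: functional_extensionality => m.
rewrite (@lmulE _ _ k B) //; try exact: zpow_vb; try exact: vb_laurent vg;
  try exact: vb_laurent (@zpow_vb k).
rewrite /conv /Defs.lshift /=; case: ifP => hd.
  by rewrite vg //; lia.
rewrite (sum_ord_pick (c:=absz (k + B - m)%R) (F := fun l : nat => zpow R k (m - B + l%:Z) * g (B - l%:Z))).
  rewrite ltnSn /zpow; case: ifP; last lia.
  by move=> _; rewrite mul1r; congr g; lia.
move=> l _ hl; rewrite /zpow; case: ifP; last by rewrite mul0r.
lia.
Qed.

Lemma S_pick hp (b c M : nat) :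
  \sum_(1 <= l < c.+1) Hc hp b l * current hp (c - l) M%:Z =
  if (M < c)%N then Hc hp b (c - M) else 0.
Proof.
rewrite (sum_pick (lo:=1) (hi:=c.+1) (c:=c - M)).
  case: ifP => h1; case: ifP => h2 //; try lia.
  by rewrite curP //; case: ifP; [rewrite mulr1 | lia].
move=> l hl hne; rewrite curP //; case: ifP; last by rewrite mulr0.
lia.
Qed.

Lemma conv_cur hp (j a M : nat) : (M <= j + a)%N ->
  conv (current hp j) (current hp a) j%:Z a%:Z M%:Z =
  current hp j (M%:Z - a%:Z) + (if (M < j + a)%N then current hp a (M%:Z - j%:Z) else 0).
Proof.
move=> hM; rewrite /conv /=.
have -> : (j%:Z + a%:Z - M%:Z < 0) = false by lia.
have -> : absz (j%:Z + a%:Z - M%:Z)%R = (j + a - M)%N by lia.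
rewrite big_ord_recl /= (@curP hp a (a%:Z - 0%:Z)); last by lia.
have -> : (a%:Z - 0%:Z == a%:Z) = true by lia.
rewrite mulr1 (_ : M%:Z - a%:Z + 0%:Z = M%:Z - a%:Z); last by lia.
congr (_ + _).
rewrite (eq_bigr (fun l : 'I_(j + a - M) =>
  current hp j (M%:Z - a%:Z + (l.+1)%:Z) * current hp a (a%:Z - (l.+1)%:Z))); last first.
  by move=> l _; rewrite /bump /=.
rewrite (sum_ord_pick (c:=(j + a - M).-1) (F := fun l : nat => current hp j (M%:Z - a%:Z + (l.+1)%:Z) * current hp a (a%:Z - (l.+1)%:Z))).
  case: ifP => h1; case: ifP => h2; try lia.
    rewrite (@curP hp j); last by lia.
    have -> : (M%:Z - a%:Z + ((j + a - M).-1.+1)%:Z == j%:Z) = true by lia.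
    by rewrite mul1r; congr current; lia.
  by [].
move=> l hl hne.
case: (leqP l.+1 a) => hla.
  rewrite (@curP hp a); last by lia.
  by case: ifP; [lia | rewrite mulr0].
rewrite (@curP hp j); last by lia.
by case: ifP; [lia | rewrite mul0r].
Qed.

Lemma CS_nonneg hp (j a M : nat) : (1 <= j)%N -> (1 <= a)%N -> CS hp j a M%:Z = 0.
Proof.
move=> j1 a1; rewrite /CS !S_pick.
rewrite (@lmulE _ _ j%:Z a%:Z); try exact: cur_vb; last by exists a%:Z; apply: cur_vb.
  2: by exists j%:Z; apply: cur_vb.
rewrite curP //.
case: (leqP M (j + a)) => hM; last first.
  rewrite /conv /=.
  have -> : (j%:Z + a%:Z - M%:Z < 0) = true by lia.
  by repeat (case: ifP => ?); rewrite /=; try ring; exfalso; lia.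
rewrite conv_cur //.
case: (ltnP M a) => ha.
  rewrite (@curN hp j); last by lia.
  have -> : absz (M%:Z - a%:Z)%R = (a - M)%N by lia.
  case: (ltnP M j) => hj.
    rewrite (@curN hp a); last by lia.
    have -> : absz (M%:Z - j%:Z)%R = (j - M)%N by lia.
    by repeat (case: ifP => ?); rewrite /=; try ring; exfalso; lia.
  rewrite (@curP hp a); last by lia.
  by repeat (case: ifP => ?); rewrite /=; try ring; exfalso; lia.
rewrite (@curP hp j); last by lia.
case: (ltnP M j) => hj.
  rewrite (@curN hp a); last by lia.
  have -> : absz (M%:Z - j%:Z)%R = (j - M)%N by lia.
  by repeat (case: ifP => ?); rewrite /=; try ring; exfalso; lia.
rewrite (@curP hp a); last by lia.
by repeat (case: ifP => ?); rewrite /=; try ring; exfalso; lia.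
Qed.

End Aux.

Lemma zero_of (R : fieldType) (x y : R) : x = 0 -> y = - x -> y = 0.
Proof. by move=> -> ->; rewrite oppr0. Qed.

Section Main.
Variables (R : fieldType) (n : nat) (hp : hpoint R).
Hypothesis n2 : (2 <= n)%N.
Hypothesis HS : in_Sn n hp.

Let n0 : (0 < n)%N. Proof. by apply: leq_trans n2. Qed.

Lemma HcN l : (1 <= l)%N -> Hc hp n l = 0.
Proof.
move=> l1; have := equal_f (proj2 HS) (- l%:Z).
rewrite curN; last by lia.
have -> : absz (- l%:Z)%R = l by lia.
by move=> ->; rewrite /zpow; case: ifP => //; lia.
Qed.

Lemma cur_plus j : in_Hplus n hp (current hp j).
Proof.
elim/ltn_ind: j => j IH.
case: (ltnP j n) => hj.
  by rewrite -(F_small hp hj); apply: HpF.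
have -> : j = (n + (j - n))%N by lia.
set k := (j - n)%N.
have kj : (k < j)%N by rewrite /k; lia.
have E : current hp (n + k) = fun m => Defs.lshift n%:Z (current hp k) m +
    (-1) * \sum_(1 <= l < n.+1) Hc hp k l * current hp (n - l) m.
  apply: functional_extensionality => m.
  have := equal_f (proj1 HS k) m; rewrite /CS /lzero (proj2 HS) (lmul_zpow _ (@cur_vb _ hp k)).
  have -> : \sum_(1 <= l < k.+1) Hc hp n l * current hp (k - l) m = 0.
    by rewrite big_nat big1 // => l /andP [hl _]; rewrite HcN // mul0r.
  move=> E; apply/eqP; rewrite -subr_eq0; apply/eqP; rewrite -[RHS]E; ring.
rewrite E; apply: HpD.
  by apply: HpS => //; apply: IH.
apply: HpZ; apply: (Hp_sum (h := fun l m => Hc hp k l * current hp (n - l) m)) => l hl.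
rewrite mem_index_iota in hl.
by apply: HpZ; apply: IH; lia.
Qed.

Lemma cur_piplus j : current hp j = piplus n hp (zpow R j%:Z).
Proof.
apply/esym; apply: (piplus_eq n0 (q := fun m => zpow R j m - current hp j m)).
split; first exact: cur_plus.
  apply: minus_part => // m m0; rewrite curP // /zpow.
  by case: ifP => _; rewrite subrr.
by apply: functional_extensionality => m; rewrite /ladd addrC subrK.
Qed.

Lemma part3 j a : (1 <= j)%N -> (1 <= a)%N ->
  CS hp j a = lopp (piminus n hp (lmul (current hp a) (piplus n hp (zpow R j%:Z)))).
Proof.
move=> j1 a1; rewrite -cur_piplus.
have XC : lmul (current hp a) (current hp j) = lmul (current hp j) (current hp a).
  by apply: lmulC; [exists a%:Z | exists j%:Z]; apply: cur_vb.
set X := lmul (current hp a) (current hp j).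
pose P := fun m => current hp (j + a) m + \sum_(1 <= l < a.+1) Hc hp j l * current hp (a - l) m
  + \sum_(1 <= l < j.+1) Hc hp a l * current hp (j - l) m.
have HX : piplus n hp X = P.
  apply: (piplus_eq n0 (q := fun m => X m - P m)); split.
  - apply: HpD; first apply: HpD; first exact: cur_plus.
      apply: (Hp_sum (h := fun l m => Hc hp j l * current hp (a - l) m)) => l _.
      by apply: HpZ; apply: cur_plus.
    apply: (Hp_sum (h := fun l m => Hc hp a l * current hp (j - l) m)) => l _.
    by apply: HpZ; apply: cur_plus.
  - apply: minus_part => // m; case: m => [M|M] // _.
    have := CS_nonneg hp M j1 a1; rewrite /CS -XC /P => E.
    apply: (zero_of E) => /=; rewrite /X; ring.
  - by apply: functional_extensionality => m; rewrite /ladd addrC subrK.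
apply: functional_extensionality => m.
rewrite /lopp /piminus /ladd HX /CS -XC /P /X /lopp /=; ring.
Qed.

End Main.

Theorem mainTheorem9 (R : fieldType) (n : nat) (hp : hpoint R) :
  (2 <= n)%N -> in_Sn n hp ->
  direct_decomposition n hp /\
  (forall j : nat, current hp j = piplus n hp (zpow R j%:Z)) /\
  (forall j a : nat, (1 <= j)%N -> (1 <= a <= n.-1)%N ->
     CS hp j a = lopp (piminus n hp (lmul (current hp a) (piplus n hp (zpow R j%:Z))))).
Proof.
move=> n2 HS; split; first by apply: dd; apply: leq_trans n2.
split; first exact: cur_piplus.
by move=> j a j1 /andP [a1 _]; apply: part3.
Qed.
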